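(* Let $D\ge 1$ and $p\ge 1$ be integers, let $h>0$, let $Q\subset\mathbb{R}^D$ be a finite set of query points, let $c_Q\in\mathbb{R}^D$, and let $R\subset\mathbb{R}^D$ be a finite set of reference points. For each multi-index $\beta$ with $\beta<p$, define the local moment $$L_\beta=\sum_{r\in R}\frac{(-1)^{|\beta|}}{\beta!}\,h_\beta\!\left(\frac{c_Q-r}{\sqrt{2h^2}}\right),$$ and for $q\in\mathbb{R}^D$ define $$\widetilde G(q)=\sum_{\beta<p}L_\beta\left(\frac{q-c_Q}{\sqrt{2h^2}}\right)^{\beta},\qquad G(q)=\sum_{r\in R}e^{-\|q-r\|^2/(2h^2)}.$$ Suppose there is $r_0$ with $0\le r_0<1$ such that $\|q-c_Q\|_\infty<r_0h$ for every $q\in Q$. Then for every $q\in Q$, $$\bigl|\widetilde G(q)-G(q)\bigr|\le\frac{|R|}{(1-r_0)^D}\sum_{k=0}^{D-1}\binom{D}{k}(1-r_0^p)^k\left(\frac{r_0^p}{\sqrt{p!}}\right)^{D-k}.$$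
   Context: Hermite polynomials: $H_n(t)=(-1)^n e^{t^2}\frac{d^n}{dt^n}e^{-t^2}$ for $t\in\mathbb{R}$; Hermite functions: $h_n(t)=e^{-t^2}H_n(t)$. For a $D$-dimensional multi-index $\alpha=(\alpha[1],\dots,\alpha[D])$ of non-negative integers and $t\in\mathbb{R}^D$: $h_\alpha(t)=\prod_{d=1}^D h_{\alpha[d]}(t[d])$, $|\alpha|=\sum_d\alpha[d]$, $\alpha!=\prod_d\alpha[d]!$, $t^\alpha=\prod_d t[d]^{\alpha[d]}$. For an integer $p$, ''$\alpha<p$'' means $\alpha[d]<p$ for every $d=1,\dots,D$ (so the sum over $\beta<p$ has $p^D$ terms). $\|\cdot\|$ is the Euclidean norm and $\|\cdot\|_\infty$ the max norm; $|R|$ is the number of points in $R$. *)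

(* Defs.v *)
From Stdlib Require Import Reals List Arith Factorial.
Import ListNotations.
Open Scope R_scope.

(* Points of R^D are functions nat -> R, coordinates 0..D-1 (0-based);
   multi-indices are functions nat -> nat. *)

Inductive nth_derivative : nat -> (R -> R) -> (R -> R) -> Prop :=
| nd_zero : forall f, nth_derivative 0 f f
| nd_succ : forall n f g g',
    nth_derivative n f g ->
    (forall t, derivable_pt_lim g t (g' t)) ->
    nth_derivative (S n) f g'.

Definition gauss (t : R) : R := exp (- t ^ 2).

Definition is_hermite_poly (H : nat -> R -> R) : Prop :=
  forall n, exists g, nth_derivative n gauss g /\
    forall t, H n t = (-1) ^ n * exp (t ^ 2) * g t.

Definition hermite_fun (H : nat -> R -> R) (n : nat) (t : R) : R :=
  exp (- t ^ 2) * H n t.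

Fixpoint sumN (n : nat) (f : nat -> R) : R :=
  match n with O => 0 | S m => sumN m f + f m end.
Fixpoint prodN (n : nat) (f : nat -> R) : R :=
  match n with O => 1 | S m => prodN m f * f m end.
Fixpoint sumNat (n : nat) (f : nat -> nat) : nat :=
  match n with O => 0%nat | S m => (sumNat m f + f m)%nat end.

Definition h_multi (H : nat -> R -> R) (D : nat) (a : nat -> nat) (t : nat -> R) : R :=
  prodN D (fun d => hermite_fun H (a d) (t d)).
Definition mabs (D : nat) (a : nat -> nat) : nat := sumNat D a.
Definition mfact (D : nat) (a : nat -> nat) : R := prodN D (fun d => INR (fact (a d))).
Definition mpow (D : nat) (t : nat -> R) (a : nat -> nat) : R := prodN D (fun d => t d ^ (a d)).

(* sum over all multi-indices beta with beta[d] < p for d < D (p^D terms);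
   entries at indices >= D are 0. *)
Definition upd (b : nat -> nat) (i j : nat) : nat -> nat :=
  fun d => if Nat.eqb d i then j else b d.
Fixpoint sum_multi_aux (D p : nat) (b : nat -> nat) (F : (nat -> nat) -> R) : R :=
  match D with
  | O => F b
  | S D' => sumN p (fun j => sum_multi_aux D' p (upd b D' j) F)
  end.
Definition sum_multi (D p : nat) (F : (nat -> nat) -> R) : R :=
  sum_multi_aux D p (fun _ => 0%nat) F.

Definition vsub (x y : nat -> R) : nat -> R := fun d => x d - y d.
Definition vscale (c : R) (x : nat -> R) : nat -> R := fun d => c * x d.
Definition norm2sq (D : nat) (x : nat -> R) : R := sumN D (fun d => x d ^ 2).
Definition in_RD (D : nat) (x : nat -> R) : Prop := forall d, (D <= d)%nat -> x d = 0.

Definition sum_list (l : list (nat -> R)) (F : (nat -> R) -> R) : R :=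
  fold_right (fun x acc => F x + acc) 0 l.

Definition local_moment (H : nat -> R -> R) (D : nat) (h : R) (cQ : nat -> R)
  (Rs : list (nat -> R)) (b : nat -> nat) : R :=
  sum_list Rs (fun r => (-1) ^ (mabs D b) / mfact D b *
     h_multi H D b (vscale (/ sqrt (2 * h ^ 2)) (vsub cQ r))).

Definition G_approx (H : nat -> R -> R) (D p : nat) (h : R) (cQ : nat -> R)
  (Rs : list (nat -> R)) (q : nat -> R) : R :=
  sum_multi D p (fun b => local_moment H D h cQ Rs b *
     mpow D (vscale (/ sqrt (2 * h ^ 2)) (vsub q cQ)) b).

Definition G_exact (D : nat) (h : R) (Rs : list (nat -> R)) (q : nat -> R) : R :=
  sum_list Rs (fun r => exp (- norm2sq D (vsub q r) / (2 * h ^ 2))).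

(* Main.v *)
Require Import Defs.
From Stdlib Require Import Reals List Arith Factorial Lra Lia Psatz FunctionalExtensionality ClassicalEpsilon.
Open Scope R_scope.

Lemma dl_mult f g f' g' x : derivable_pt_lim f x f' -> derivable_pt_lim g x g' ->
  derivable_pt_lim (fun y => f y * g y) x (f' * g x + f x * g').
Proof. intros A B. exact (derivable_pt_lim_mult f g x f' g' A B). Qed.
Lemma dl_plus f g f' g' x : derivable_pt_lim f x f' -> derivable_pt_lim g x g' ->
  derivable_pt_lim (fun y => f y + g y) x (f' + g').
Proof. intros A B. exact (derivable_pt_lim_plus f g x f' g' A B). Qed.
Lemma dl_minus f g f' g' x : derivable_pt_lim f x f' -> derivable_pt_lim g x g' ->
  derivable_pt_lim (fun y => f y - g y) x (f' - g').
Proof. intros A B. exact (derivable_pt_lim_minus f g x f' g' A B). Qed.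
Lemma dl_const a x : derivable_pt_lim (fun _ => a) x 0.
Proof. exact (derivable_pt_lim_const a x). Qed.
Lemma dl_id x : derivable_pt_lim (fun y => y) x 1.
Proof. exact (derivable_pt_lim_id x). Qed.
Lemma dl_ext f g x l : (forall y, f y = g y) -> derivable_pt_lim f x l -> derivable_pt_lim g x l.
Proof. intros E D. replace g with f; auto. apply functional_extensionality; auto. Qed.
Lemma dl_eq f x l1 l2 : l1 = l2 -> derivable_pt_lim f x l1 -> derivable_pt_lim f x l2.
Proof. intros ->; auto. Qed.

Lemma nd_unique n f g1 g2 : nth_derivative n f g1 -> nth_derivative n f g2 -> forall t, g1 t = g2 t.
Proof.
  intros D1; revert g2; induction D1 as [f|n f g g' Dn IH Dd]; intros g2 D2.
  - inversion D2; subst; auto.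
  - inversion D2 as [|n0 f0 g0 g2' Dn2 Dd2]; subst.
    intros t. assert (E : g = g0) by (apply functional_extensionality; apply IH; auto).
    subst. eapply uniqueness_limite; eauto.
Qed.

Lemma gauss_deriv t : derivable_pt_lim gauss t (-2 * t * gauss t).
Proof.
  unfold gauss.
  assert (A : derivable_pt_lim (fun y => - y ^ 2) t (- (INR 2 * t ^ 1))).
  { apply (derivable_pt_lim_opp (fun y => y^2)). apply derivable_pt_lim_pow. }
  pose proof (derivable_pt_lim_comp _ _ _ _ _ A (derivable_pt_lim_exp (- t ^ 2))) as B.
  unfold comp in B. eapply dl_eq; [|exact B]. simpl. ring.
Qed.

Section G.
Variable gs : nat -> R -> R.
Hypothesis Hg0 : forall t, gs 0 t = gauss t.
Hypothesis Hgd : forall n t, derivable_pt_lim (gs n) t (gs (S n) t).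

Lemma grec n t : gs (S n) t = -2 * t * gs n t - 2 * INR n * gs (pred n) t.
Proof.
  revert t; induction n as [|n IH]; intros t.
  - assert (E : gs 0 = gauss) by (apply functional_extensionality; auto).
    pose proof (Hgd 0 t) as D. rewrite E in D.
    rewrite (uniqueness_limite _ _ _ _ D (gauss_deriv t)). simpl. rewrite Hg0. ring.
  - assert (D : derivable_pt_lim (gs (S n)) t
        (-2 * (1 * gs n t + t * gs (S n) t) - 2 * INR n * gs (S (pred n)) t)).
    { apply (dl_ext (fun t => -2 * t * gs n t - 2 * INR n * gs (pred n) t)).
      { intros; symmetry; apply IH. }
      apply dl_minus.
      - eapply dl_eq; [|apply dl_mult; [apply dl_mult; [apply dl_const|apply dl_id]|apply Hgd]].
        cbv beta; ring.
      - eapply dl_eq; [|apply dl_mult; [apply dl_const|apply Hgd]]. cbv beta; ring. }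
    rewrite (uniqueness_limite _ _ _ _ (Hgd (S n) t) D).
    destruct n as [|m]; simpl pred; rewrite !S_INR; simpl INR; ring.
Qed.

Lemma gvals n : (gs n 0)^2 <= 2^n * INR (fact n) /\
  (gs (S n) 0)^2 <= 2^(S n) * INR (fact (S n)) /\ gs n 0 * gs (S n) 0 = 0.
Proof.
  induction n as [|n [A [B C]]].
  - rewrite grec, Hg0. unfold gauss. simpl. replace (- (0*(0*1))) with 0 by ring. rewrite exp_0. split; [|split]; lra.
  - split; [exact B|]. rewrite (grec (S n)). simpl pred.
    assert (F : 0 <= INR (fact n)) by apply pos_INR.
    assert (N : 0 <= INR n) by apply pos_INR.
    split.
    + rewrite !fact_simpl, !mult_INR, !S_INR.
      replace (2 ^ S (S n)) with (4 * 2^n) by (simpl; ring).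
      replace ((-2 * 0 * gs (S n) 0 - 2 * (INR n + 1) * gs n 0) ^ 2) with
        (4 * (INR n + 1)^2 * (gs n 0)^2) by ring.
      assert (P : 0 <= 2 ^ n) by (apply pow_le; lra).
      apply Rle_trans with (4 * (INR n + 1)^2 * (2^n * INR (fact n))).
      * apply Rmult_le_compat_l; [nra|exact A].
      * nra.
    + replace (gs (S n) 0 * (-2 * 0 * gs (S n) 0 - 2 * INR (S n) * gs n 0)) with
        (-2 * INR (S n) * (gs n 0 * gs (S n) 0)) by ring. rewrite C. ring.
Qed.

Lemma gbound n t : (gs n t)^2 <= 2^n * INR (fact n).
Proof.
  set (c := 2 * (INR n + 1)).
  assert (cp : 0 < c) by (unfold c; pose proof (pos_INR n); lra).
  set (Sf := fun y => (gs n y)^2 + (gs (S n) y)^2 / c).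
  assert (DS : forall y, derivable_pt_lim Sf y (-2 * y * (gs (S n) y)^2 / (INR n + 1))).
  { intro y. unfold Sf.
    eapply dl_eq; [|apply dl_plus; [apply dl_mult; [apply Hgd|apply dl_mult; [apply Hgd|apply dl_const]]|
       unfold Rdiv; apply dl_mult; [apply dl_mult; [apply Hgd|apply dl_mult; [apply Hgd|apply dl_const]]|apply dl_const]]].
    rewrite (grec (S n)). simpl pred. rewrite S_INR. unfold c. field. pose proof (pos_INR n); lra. }
  assert (S0 : Sf 0 <= 2^n * INR (fact n)).
  { destruct (gvals n) as [A [B C]]. unfold Sf.
    destruct (Rmult_integral _ _ C) as [Z|Z]; rewrite Z.
    - replace (0^2) with 0 by ring. rewrite fact_simpl, mult_INR, S_INR in B. simpl pow in B.
      apply Rmult_le_reg_r with c; auto. unfold Rdiv. rewrite Rplus_0_l, Rmult_assoc, Rinv_l by lra.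
      unfold c. lra.
    - replace (0^2/c) with 0 by (unfold Rdiv; ring). lra. }
  assert (St : Sf t <= Sf 0).
  { destruct (Rtotal_order t 0) as [L|[E|L]].
    - destruct (MVT_cor2 Sf _ t 0 L (fun c _ => DS c)) as [z [E [c1 c2]]].
      assert (0 <= -2 * z * gs (S n) z ^ 2 / (INR n + 1)).
      { unfold Rdiv. apply Rmult_le_pos; [|apply Rlt_le, Rinv_0_lt_compat; pose proof (pos_INR n); lra].
        pose proof (pow2_ge_0 (gs (S n) z)). nra. }
      nra.
    - subst; lra.
    - destruct (MVT_cor2 Sf _ 0 t L (fun c _ => DS c)) as [z [E [c1 c2]]].
      assert (-2 * z * gs (S n) z ^ 2 / (INR n + 1) <= 0).
      { unfold Rdiv. assert (0 < / (INR n + 1)) by (apply Rinv_0_lt_compat; pose proof (pos_INR n); lra).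
        pose proof (pow2_ge_0 (gs (S n) z)).
        assert (0 <= gs (S n) z ^ 2 * / (INR n + 1)) by (apply Rmult_le_pos; lra).
        replace (-2 * z * gs (S n) z ^ 2 * / (INR n + 1)) with (-2 * z * (gs (S n) z ^ 2 * / (INR n + 1))) by ring.
        nra. }
      nra. }
  assert (gs n t ^ 2 <= Sf t).
  { unfold Sf. assert (0 <= gs (S n) t ^ 2 / c) by (unfold Rdiv; apply Rmult_le_pos; [apply pow2_ge_0|apply Rlt_le, Rinv_0_lt_compat; auto]). lra. }
  lra.
Qed.
End G.

Lemma cauchy_mvt f f' g g' a b : a < b ->
  (forall c, a <= c <= b -> derivable_pt_lim f c (f' c)) ->
  (forall c, a <= c <= b -> derivable_pt_lim g c (g' c)) ->
  exists c, a < c < b /\ (g b - g a) * f' c = (f b - f a) * g' c.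
Proof.
  intros ab Hf Hg.
  assert (pf : forall c, a < c < b -> derivable_pt f c).
  { intros c Hc. exists (f' c). apply Hf; lra. }
  assert (pg : forall c, a < c < b -> derivable_pt g c).
  { intros c Hc. exists (g' c). apply Hg; lra. }
  destruct (MVT f g a b pf pg ab) as [c [P E]].
  - intros c Hc. apply derivable_continuous_pt. exists (f' c). apply Hf; lra.
  - intros c Hc. apply derivable_continuous_pt. exists (g' c). apply Hg; lra.
  - exists c. split; auto.
    rewrite (derive_pt_eq_0 f c (f' c) (pf c P)) in E by (apply Hf; lra).
    rewrite (derive_pt_eq_0 g c (g' c) (pg c P)) in E by (apply Hg; lra). exact E.
Qed.

Lemma sumN_shift p f : sumN (S p) f = f 0%nat + sumN p (fun n => f (S n)).
Proof. induction p as [|p IH]; simpl in *; [ring|]. rewrite IH. ring. Qed.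

Lemma dl_sumN p (F : nat -> R -> R) F' x :
  (forall n, derivable_pt_lim (F n) x (F' n)) ->
  derivable_pt_lim (fun y => sumN p (fun n => F n y)) x (sumN p F').
Proof.
  intros HF. induction p as [|p IH]; simpl.
  - apply dl_const.
  - apply dl_plus; auto.
Qed.

Lemma dl_shift g u y l : derivable_pt_lim g (u + y) l -> derivable_pt_lim (fun z => g (u + z)) y l.
Proof.
  intros D.
  assert (A : derivable_pt_lim (fun z => u + z) y 1).
  { eapply dl_eq; [|apply dl_plus; [apply dl_const|apply dl_id]]. ring. }
  pose proof (derivable_pt_lim_comp _ _ _ _ _ A D) as B.
  eapply dl_eq; [|exact B]. ring.
Qed.

Section T.
Variable gs : nat -> R -> R.
Hypothesis Hgd : forall n t, derivable_pt_lim (gs n) t (gs (S n) t).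

Definition T k p u y := sumN p (fun n => gs (k+n) u * y^n / INR (fact n)).

Lemma T_deriv k p u y : derivable_pt_lim (T k (S p) u) y (T (S k) p u y).
Proof.
  unfold T.
  apply (dl_ext (fun y => gs (k+0) u * 1 / INR (fact 0) +
      sumN p (fun n => gs (k + S n) u * y^(S n) / INR (fact (S n))))).
  { intros z. rewrite sumN_shift. reflexivity. }
  eapply dl_eq; [|apply dl_plus; [apply dl_const|apply dl_sumN]].
  2:{ intros n. unfold Rdiv. apply dl_mult; [apply dl_mult; [apply dl_const|apply derivable_pt_lim_pow]|apply dl_const]. }
  rewrite Rplus_0_l. f_equal. apply functional_extensionality. intros n.
  cbv beta. replace (k + S n)%nat with (S k + n)%nat by lia.
  simpl pred. rewrite fact_simpl, mult_INR. field.
  split; [apply INR_fact_neq_0|]. apply not_0_INR. lia.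
Qed.

Lemma sumN_zero p f : (forall n, f n = 0) -> sumN p f = 0.
Proof. intros Hf; induction p; simpl; [reflexivity|]. rewrite IHp, Hf. ring. Qed.

Lemma T_zero k p u : T k (S p) u 0 = gs k u.
Proof.
  unfold T. rewrite sumN_shift. rewrite Nat.add_0_r.
  rewrite sumN_zero. { simpl. field. }
  intros n. simpl pow. unfold Rdiv. ring.
Qed.

Lemma taylor p : forall k u x, exists xi,
  gs k (u + x) - T k p u x = gs (k + p) xi * x ^ p / INR (fact p).
Proof.
  induction p as [|p IH]; intros k u x.
  - exists (u + x). unfold T. simpl. rewrite Nat.add_0_r. field.
  - destruct (Rtotal_order x 0) as [L|[E|L]].
    + set (f := fun y => gs k (u + y) - T k (S p) u y).
      assert (Df : forall y, derivable_pt_lim f y (gs (S k) (u + y) - T (S k) p u y)).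
      { intro y. unfold f. apply dl_minus; [|apply T_deriv].
        apply dl_shift, Hgd. }
      destruct (cauchy_mvt f _ (fun y => y ^ (S p)) (fun y => INR (S p) * y ^ p) x 0 L
        (fun c _ => Df c) (fun c _ => derivable_pt_lim_pow c (S p))) as [c [Hc E]].
      destruct (IH (S k) u c) as [xi Exi].
      exists xi. rewrite Exi in E. unfold f in E. rewrite T_zero in E.
      replace (u + 0) with u in E by ring.
      replace (k + S p)%nat with (S k + p)%nat by lia.
      rewrite fact_simpl, mult_INR.
      assert (cp : c ^ p <> 0) by (apply pow_nonzero; lra).
      assert (F : INR (fact p) <> 0) by apply INR_fact_neq_0.
      assert (F2 : INR (S p) <> 0) by (apply not_0_INR; lia).
      simpl pow in E |- *.
      apply Rmult_eq_reg_r with (INR (S p) * c ^ p); [|intro Z; apply Rmult_integral in Z; destruct Z; contradiction].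
      transitivity (x * x ^ p * (gs (S k + p) xi * c ^ p / INR (fact p))); [|field; auto].
      lra.
    + subst. exists u. rewrite Rplus_0_r, T_zero. unfold Rdiv. simpl pow. ring.
    + set (f := fun y => gs k (u + y) - T k (S p) u y).
      assert (Df : forall y, derivable_pt_lim f y (gs (S k) (u + y) - T (S k) p u y)).
      { intro y. unfold f. apply dl_minus; [|apply T_deriv].
        apply dl_shift, Hgd. }
      destruct (cauchy_mvt f _ (fun y => y ^ (S p)) (fun y => INR (S p) * y ^ p) 0 x L
        (fun c _ => Df c) (fun c _ => derivable_pt_lim_pow c (S p))) as [c [Hc E]].
      destruct (IH (S k) u c) as [xi Exi].
      exists xi. rewrite Exi in E. unfold f in E. rewrite T_zero in E.
      replace (u + 0) with u in E by ring.
      replace (k + S p)%nat with (S k + p)%nat by lia.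
      rewrite fact_simpl, mult_INR.
      assert (cp : c ^ p <> 0) by (apply pow_nonzero; lra).
      assert (F : INR (fact p) <> 0) by apply INR_fact_neq_0.
      assert (F2 : INR (S p) <> 0) by (apply not_0_INR; lia).
      simpl pow in E |- *.
      apply Rmult_eq_reg_r with (INR (S p) * c ^ p); [|intro Z; apply Rmult_integral in Z; destruct Z; contradiction].
      transitivity (x * x ^ p * (gs (S k + p) xi * c ^ p / INR (fact p))); [|field; auto].
      lra.
Qed.
End T.

Lemma sumN_ext n f g : (forall d, (d < n)%nat -> f d = g d) -> sumN n f = sumN n g.
Proof. induction n; intros E; simpl; auto. rewrite IHn, E; auto. Qed.
Lemma prodN_ext n f g : (forall d, (d < n)%nat -> f d = g d) -> prodN n f = prodN n g.
Proof. induction n; intros E; simpl; auto. rewrite IHn, E; auto. Qed.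
Lemma sumN_plus n f g : sumN n (fun j => f j + g j) = sumN n f + sumN n g.
Proof. induction n; simpl; [ring|rewrite IHn; ring]. Qed.
Lemma sumN_scal n c f : sumN n (fun j => c * f j) = c * sumN n f.
Proof. induction n; simpl; [ring|rewrite IHn; ring]. Qed.
Lemma prodN_mult n f g : prodN n (fun j => f j * g j) = prodN n f * prodN n g.
Proof. induction n; simpl; [ring|rewrite IHn; ring]. Qed.
Lemma prodN_inv n f : / prodN n f = prodN n (fun j => / f j).
Proof. induction n; simpl; [apply Rinv_1|rewrite Rinv_mult, IHn; ring]. Qed.
Lemma pow_sumNat n (b : nat -> nat) x : x ^ (sumNat n b) = prodN n (fun d => x ^ (b d)).
Proof. induction n; simpl; [ring|rewrite pow_add, IHn; ring]. Qed.
Lemma prodN_one n : prodN n (fun _ => 1) = 1.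
Proof. induction n; simpl; [ring|rewrite IHn; ring]. Qed.

Lemma prodN_single D k g : (k < D)%nat ->
  prodN D g = g k * prodN D (fun d => if Nat.eqb d k then 1 else g d).
Proof.
  induction D as [|D IH]; intros L; [lia|]. simpl.
  destruct (Nat.eq_dec k D) as [->|N].
  - rewrite Nat.eqb_refl.
    rewrite (prodN_ext D (fun d => if Nat.eqb d D then 1 else g d) g).
    + ring.
    + intros d Hd. destruct (Nat.eqb_spec d D); [lia|auto].
  - rewrite (IH ltac:(lia)). destruct (Nat.eqb_spec D k); [lia|]. ring.
Qed.

Lemma sum_multi_fact D p (f : nat -> nat -> R) : forall k b, (k <= D)%nat ->
  sum_multi_aux k p b (fun be => prodN D (fun d => f d (be d))) =
  prodN k (fun d => sumN p (f d)) * prodN D (fun d => if Nat.ltb d k then 1 else f d (b d)).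
Proof.
  induction k as [|k IH]; intros b L; simpl.
  - rewrite Rmult_1_l. apply prodN_ext. intros d _; destruct d; reflexivity.
  - set (X := prodN k (fun d => sumN p (f d)) *
        prodN D (fun d => if Nat.ltb d (S k) then 1 else f d (b d))).
    rewrite (sumN_ext p _ (fun j => X * f k j)).
    + rewrite sumN_scal. unfold X. ring.
    + intros j _. rewrite IH by lia.
      rewrite (prodN_single D k) by lia.
      unfold upd at 1. rewrite Nat.ltb_irrefl, Nat.eqb_refl.
      unfold X.
      rewrite (prodN_ext D _ (fun d => if Nat.ltb d (S k) then 1 else f d (b d))); [ring|].
      intros d _. destruct (Nat.eqb_spec d k) as [E|E].
      * subst. destruct (Nat.ltb_spec k (S k)); [auto|lia].
      * destruct (Nat.ltb_spec d k); destruct (Nat.ltb_spec d (S k)); try lia; auto.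
        unfold upd. destruct (Nat.eqb_spec d k); [lia|auto].
Qed.

Lemma sum_multi_prod D p (f : nat -> nat -> R) :
  sum_multi D p (fun be => prodN D (fun d => f d (be d))) = prodN D (fun d => sumN p (f d)).
Proof.
  unfold sum_multi. rewrite sum_multi_fact by lia.
  rewrite (prodN_ext D (fun d => if Nat.ltb d D then 1 else f d (0%nat)) (fun _ => 1)); [rewrite prodN_one; ring|].
  intros d Hd. destruct (Nat.ltb_spec d D); [auto|lia].
Qed.

Lemma sum_multi_list k p (Rs : list (nat -> R)) (K : (nat -> R) -> (nat -> nat) -> R) : forall b,
  sum_multi_aux k p b (fun be => sum_list Rs (fun r => K r be)) =
  sum_list Rs (fun r => sum_multi_aux k p b (K r)).
Proof.
  induction k as [|k IH]; intros b; simpl; auto.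
  rewrite (sumN_ext p _ (fun j => sum_list Rs (fun r => sum_multi_aux k p (upd b k j) (K r))))
    by (intros; apply IH).
  clear IH. induction Rs as [|r Rs IHR]; simpl.
  - apply sumN_zero. auto.
  - rewrite sumN_plus, IHR. reflexivity.
Qed.

Lemma sum_list_mult_r (Rs : list (nat -> R)) F c : sum_list Rs F * c = sum_list Rs (fun r => F r * c).
Proof. induction Rs; simpl; [ring|rewrite <- IHRs; ring]. Qed.
Lemma sum_list_minus (Rs : list (nat -> R)) F G : sum_list Rs F - sum_list Rs G = sum_list Rs (fun r => F r - G r).
Proof. induction Rs; simpl; [ring|rewrite <- IHRs; ring]. Qed.
Lemma sum_list_bound (Rs : list (nat -> R)) F M : (forall r, Rabs (F r) <= M) ->
  Rabs (sum_list Rs F) <= INR (length Rs) * M.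
Proof.
  intros HF. induction Rs as [|r Rs IH].
  - unfold sum_list; simpl. rewrite Rabs_R0. lra.
  - change (length (r :: Rs)) with (S (length Rs)). rewrite S_INR.
    change (sum_list (r :: Rs) F) with (F r + sum_list Rs F). eapply Rle_trans; [apply Rabs_triang|]. specialize (HF r). lra.
Qed.
Lemma sum_list_ext (Rs : list (nat -> R)) F G : (forall r, F r = G r) -> sum_list Rs F = sum_list Rs G.
Proof. intros E; induction Rs; simpl; [auto|rewrite IHRs, E; auto]. Qed.

Lemma prod_diff A B (P Q : nat -> R) n : 0 <= A -> 0 <= B ->
  (forall d, (d < n)%nat -> Rabs (P d) <= A /\ Rabs (Q d - P d) <= B) ->
  Rabs (prodN n P - prodN n Q) <= (A + B)^n - A^n /\ Rabs (prodN n Q) <= (A + B)^n.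
Proof.
  intros HA HB. induction n as [|n IH]; intros Hd; simpl.
  - rewrite Rminus_diag, Rabs_R0, Rabs_R1. lra.
  - destruct IH as [I1 I2]; [intros; apply Hd; lia|].
    destruct (Hd n ltac:(lia)) as [H1 H2].
    assert (PQ : Rabs (Q n) <= A + B).
    { replace (Q n) with (P n + (Q n - P n)) by ring. eapply Rle_trans; [apply Rabs_triang|lra]. }
    assert (An : 0 <= A ^ n) by (apply pow_le; lra).
    assert (ABn : 0 <= (A + B) ^ n) by (apply pow_le; lra).
    assert (AB : A ^ n <= (A + B) ^ n) by (apply pow_incr; lra).
    split.
    + replace (prodN n P * P n - prodN n Q * Q n) with
        ((prodN n P - prodN n Q) * P n - prodN n Q * (Q n - P n)) by ring.
      eapply Rle_trans; [apply Rabs_triang|]. rewrite Rabs_Ropp, !Rabs_mult.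
      apply Rle_trans with (((A + B) ^ n - A ^ n) * A + (A + B) ^ n * B).
      * apply Rplus_le_compat; apply Rmult_le_compat; auto using Rabs_pos; lra.
      * lra.
    + rewrite Rabs_mult, Rmult_comm. apply Rmult_le_compat; auto using Rabs_pos; lra.
Qed.

Lemma abs_of_sq a b : a^2 <= b^2 -> 0 <= b -> Rabs a <= b.
Proof. intros H1 H2. destruct (Rcase_abs a) as [N|N]; [rewrite Rabs_left|rewrite Rabs_right]; nra. Qed.

Lemma exp_sum D (a : nat -> R) c : exp (- sumN D a / c) = prodN D (fun d => exp (- a d / c)).
Proof.
  induction D; simpl.
  - replace (- 0 / c) with 0 by (unfold Rdiv; ring). apply exp_0.
  - rewrite <- IHD, <- exp_plus. f_equal. unfold Rdiv; ring.
Qed.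

Lemma geom n r : r <> 1 -> sumN n (fun j => r ^ j) = (1 - r ^ n) / (1 - r).
Proof.
  intros Hr. assert (1 - r <> 0) by lra. induction n; simpl.
  - field; auto.
  - rewrite IHn. field; auto.
Qed.

Lemma nd_succ_inv n f g' : nth_derivative (S n) f g' ->
  exists g, nth_derivative n f g /\ forall t, derivable_pt_lim g t (g' t).
Proof. intros D; inversion D; eauto. Qed.

Lemma m1sq n : (-1)^n * (-1)^n = 1.
Proof. rewrite <- Rpow_mult_distr. replace (-1 * -1) with 1 by ring. apply pow1. Qed.

Lemma sumN_abs n f : Rabs (sumN n f) <= sumN n (fun j => Rabs (f j)).
Proof. induction n; simpl. rewrite Rabs_R0; lra. eapply Rle_trans; [apply Rabs_triang|lra]. Qed.
Lemma sumN_le n f g : (forall j, (j < n)%nat -> f j <= g j) -> sumN n f <= sumN n g.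
Proof. induction n; intros E; simpl; [lra|]. apply Rplus_le_compat; auto. Qed.

Lemma pow_sq_comm x n : (x^n)^2 = (x^2)^n.
Proof. rewrite <- !pow_mult, Nat.mul_comm. reflexivity. Qed.

Lemma termsq g y n r0 : g^2 <= 2^n * INR (fact n) -> y^2 <= r0^2/2 ->
  (g * y^n / INR (fact n))^2 <= (r0^n)^2 / INR (fact n).
Proof.
  intros Hg Hy. set (F := INR (fact n)).
  assert (Fp : 0 < F) by (apply lt_0_INR, lt_O_fact).
  replace ((g*y^n/F)^2) with (g^2 * (y^2)^n / F^2)
    by (rewrite <- pow_sq_comm; field; lra).
  replace ((r0^n)^2) with (2^n * (r0^2/2)^n)
    by (rewrite <- Rpow_mult_distr; replace (2*(r0^2/2)) with (r0^2) by field;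
        symmetry; apply pow_sq_comm).
  assert (Y : (y^2)^n <= (r0^2/2)^n) by (apply pow_incr; split; [apply pow2_ge_0|auto]).
  assert (0 <= (y^2)^n) by (apply pow_le, pow2_ge_0).
  assert (0 <= g^2) by apply pow2_ge_0.
  assert (0 <= 2^n) by (apply pow_le; lra).
  apply Rle_trans with (2^n * F * (r0^2/2)^n / F^2).
  - unfold Rdiv. apply Rmult_le_compat_r.
    + apply Rlt_le, Rinv_0_lt_compat. nra.
    + apply Rmult_le_compat; auto.
  - right. field. lra.
Qed.

Lemma Cnn n : C n n = 1.
Proof. unfold C. rewrite Nat.sub_diag. replace (INR (fact 0)) with 1 by reflexivity. field. apply INR_fact_neq_0. Qed.

Lemma final_alg m a b c : c <> 0 ->
  (a/c + b/c)^(S m) - (a/c)^(S m) = / c^(S m) * sum_f_R0 (fun k => C (S m) k * a^k * b^(S m - k)) m.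
Proof.
  intros Hc. rewrite binomial, tech5, Cnn, Nat.sub_diag. simpl pow at 3.
  rewrite scal_sum.
  match goal with |- ?X + ?Y - ?Z = _ => replace (X + Y - Z) with X by (simpl; ring) end.
  apply sum_eq. intros i Hi.
  unfold Rdiv. rewrite !Rpow_mult_distr, !pow_inv.
  replace (c^(S m)) with (c^i * c^(S m - i)) by (rewrite <- pow_add; f_equal; lia).
  rewrite Rinv_mult. ring.
Qed.

Theorem mainTheorem1 (H : nat -> R -> R) (HH : is_hermite_poly H)
  (D p : nat) (hD : (1 <= D)%nat) (hp : (1 <= p)%nat)
  (h : R) (hh : 0 < h)
  (Q : list (nat -> R)) (hQ : NoDup Q) (hQD : forall q, In q Q -> in_RD D q)
  (cQ : nat -> R) (hcQ : in_RD D cQ)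
  (Rs : list (nat -> R)) (hR : NoDup Rs) (hRD : forall r, In r Rs -> in_RD D r)
  (r0 : R) (hr0 : 0 <= r0 < 1)
  (hcover : forall q, In q Q -> forall d, (d < D)%nat -> Rabs (q d - cQ d) < r0 * h) :
  forall q, In q Q ->
    Rabs (G_approx H D p h cQ Rs q - G_exact D h Rs q) <=
      INR (length Rs) / (1 - r0) ^ D *
      sum_f_R0 (fun k => C D k * (1 - r0 ^ p) ^ k *
                  (r0 ^ p / sqrt (INR (fact p))) ^ (D - k)) (D - 1).
Proof.
  intros q Hq.
  pose (gs := fun n => proj1_sig (constructive_indefinite_description _ (HH n))).
  assert (Gspec : forall n, nth_derivative n gauss (gs n) /\
     forall t, H n t = (-1)^n * exp (t^2) * gs n t).
  { intro n. exact (proj2_sig (constructive_indefinite_description _ (HH n))). }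
  assert (Hg0 : forall t, gs 0%nat t = gauss t).
  { intro t. exact (nd_unique 0 gauss (gs 0%nat) gauss (proj1 (Gspec 0%nat)) (nd_zero gauss) t). }
  assert (Hgd : forall n t, derivable_pt_lim (gs n) t (gs (S n) t)).
  { intros n t. destruct (nd_succ_inv _ _ _ (proj1 (Gspec (S n)))) as [g [Dg Dd]].
    assert (E : g = gs n).
    { apply functional_extensionality. apply (nd_unique n gauss); auto. apply Gspec. }
    subst g. apply Dd. }
  assert (Hh : forall n t, hermite_fun H n t = (-1)^n * gs n t).
  { intros n t. unfold hermite_fun. rewrite (proj2 (Gspec n)).
    replace (exp (- t^2) * ((-1)^n * exp (t^2) * gs n t)) with
      ((exp (- t^2) * exp (t^2)) * ((-1)^n * gs n t)) by ring.
    rewrite <- exp_plus. replace (- t^2 + t^2) with 0 by ring. rewrite exp_0. ring. }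
  clearbody gs.
  set (s := sqrt (2 * h ^ 2)).
  assert (s2 : s ^ 2 = 2 * h ^ 2).
  { unfold s. replace (sqrt (2*h^2) ^ 2) with (sqrt (2*h^2) * sqrt (2*h^2)) by ring. apply sqrt_sqrt. nra. }
  assert (sp : 0 < s) by (unfold s; apply sqrt_lt_R0; nra).
  set (x := fun d => / s * (q d - cQ d)).
  set (u := fun (r : nat -> R) d => / s * (cQ d - r d)).
  set (f := fun r d n => gs n (u r d) * x d ^ n / INR (fact n)).
  assert (S1 : G_approx H D p h cQ Rs q = sum_list Rs (fun r => prodN D (fun d => sumN p (f r d)))).
  { unfold G_approx, local_moment.
    transitivity (sum_multi D p (fun b => sum_list Rs (fun r => prodN D (fun d => f r d (b d))))).
    - unfold sum_multi. f_equal. apply functional_extensionality. intro b.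
      rewrite sum_list_mult_r. apply sum_list_ext. intro r.
      unfold mabs, mfact, h_multi, mpow. rewrite pow_sumNat. unfold Rdiv. rewrite prodN_inv.
      rewrite <- !prodN_mult. apply prodN_ext. intros d _. rewrite Hh.
      unfold f, vscale, vsub, u, x. fold s. unfold Rdiv.
      transitivity (((-1)^(b d) * (-1)^(b d)) *
         (gs (b d) (/ s * (cQ d - r d)) * (/ s * (q d - cQ d)) ^ b d * / INR (fact (b d)))); [ring|].
      rewrite m1sq. ring.
    - unfold sum_multi.
      rewrite (sum_multi_list D p Rs (fun r be => prodN D (fun d => f r d (be d)))).
      apply sum_list_ext. intro r. exact (sum_multi_prod D p (f r)). }
  assert (S2 : G_exact D h Rs q = sum_list Rs (fun r => prodN D (fun d => gs 0%nat (u r d + x d)))).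
  { unfold G_exact. apply sum_list_ext. intro r. unfold norm2sq. rewrite exp_sum.
    apply prodN_ext. intros d _. rewrite Hg0. unfold gauss, vsub. f_equal.
    unfold u, x. replace (/ s * (cQ d - r d) + / s * (q d - cQ d)) with (/ s * (q d - r d)) by ring.
    rewrite Rpow_mult_distr, pow_inv, s2. field. lra. }
  set (A := (1 - r0 ^ p) / (1 - r0)).
  set (B := r0 ^ p / sqrt (INR (fact p)) / (1 - r0)).
  assert (c0 : 0 < 1 - r0) by lra.
  assert (Fp : 0 < INR (fact p)) by (apply lt_0_INR, lt_O_fact).
  assert (sFp : 0 < sqrt (INR (fact p))) by (apply sqrt_lt_R0; auto).
  assert (rp : 0 <= r0 ^ p) by (apply pow_le; lra).
  assert (rp1 : r0 ^ p <= 1) by (rewrite <- (pow1 p); apply pow_incr; lra).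
  assert (HA : 0 <= A) by (unfold A, Rdiv; apply Rmult_le_pos; [lra|apply Rlt_le, Rinv_0_lt_compat; lra]).
  assert (HB : 0 <= B).
  { unfold B, Rdiv. apply Rmult_le_pos; [apply Rmult_le_pos; auto|]; apply Rlt_le, Rinv_0_lt_compat; lra. }
  assert (Hx : forall d, (d < D)%nat -> x d ^ 2 <= r0 ^ 2 / 2).
  { intros d Hd. specialize (hcover q Hq d Hd). unfold x.
    rewrite Rpow_mult_distr, pow_inv, s2.
    assert (E : (q d - cQ d) ^ 2 <= (r0 * h) ^ 2).
    { rewrite <- (pow2_abs (q d - cQ d)). apply pow_incr. split; [apply Rabs_pos|lra]. }
    apply Rle_trans with (/ (2 * h ^ 2) * (r0 * h) ^ 2).
    - apply Rmult_le_compat_l; auto. apply Rlt_le, Rinv_0_lt_compat. nra.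
    - right. field. lra. }
  assert (PB : forall r, Rabs (prodN D (fun d => sumN p (f r d)) - prodN D (fun d => gs 0%nat (u r d + x d)))
                 <= (A + B) ^ D - A ^ D).
  { intro r. apply prod_diff; auto. intros d Hd. split.
    - eapply Rle_trans; [apply sumN_abs|].
      apply Rle_trans with (sumN p (fun j => r0 ^ j)).
      + apply sumN_le. intros j _. apply abs_of_sq; [|apply pow_le; lra].
        eapply Rle_trans; [apply termsq; [apply gbound; auto|apply Hx; auto]|].
        assert (F1 : 1 <= INR (fact j)) by (apply (le_INR 1), lt_O_fact).
        assert (0 <= (r0^j)^2) by apply pow2_ge_0.
        unfold Rdiv. rewrite <- (Rmult_1_r ((r0^j)^2)) at 2. apply Rmult_le_compat_l; auto.
        rewrite <- Rinv_1. apply Rinv_le_contravar; lra.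
      + right. apply geom. lra.
    - destruct (taylor gs Hgd p 0%nat (u r d) (x d)) as [xi Exi].
      unfold T in Exi. simpl plus in Exi. change (sumN p (fun n => gs n (u r d) * x d ^ n / INR (fact n))) with (sumN p (f r d)) in Exi.
      rewrite Exi.
      apply Rle_trans with (r0 ^ p / sqrt (INR (fact p))).
      + apply abs_of_sq.
        * replace ((r0 ^ p / sqrt (INR (fact p))) ^ 2) with ((r0^p)^2 / INR (fact p)).
          { apply termsq; [apply gbound; auto|apply Hx; auto]. }
          unfold Rdiv. rewrite Rpow_mult_distr, pow_inv. f_equal. f_equal. replace (sqrt (INR (fact p)) ^ 2) with (sqrt (INR (fact p)) * sqrt (INR (fact p))) by ring. rewrite sqrt_sqrt; lra.
        * unfold Rdiv. apply Rmult_le_pos; auto. apply Rlt_le, Rinv_0_lt_compat; auto.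
      + unfold B. set (X := r0 ^ p / sqrt (INR (fact p))).
        assert (0 <= X) by (unfold X, Rdiv; apply Rmult_le_pos; auto; apply Rlt_le, Rinv_0_lt_compat; auto).
        apply Rmult_le_reg_r with (1 - r0); auto. unfold Rdiv. rewrite Rmult_assoc, Rinv_l by lra. nra. }
  rewrite S1, S2, sum_list_minus.
  eapply Rle_trans; [apply sum_list_bound; exact PB|].
  right. destruct D as [|m]; [lia|]. replace (S m - 1)%nat with m by lia.
  unfold A, B. rewrite final_alg by lra. unfold Rdiv. ring.
Qed.
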